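(* Using the notation below, the maximum of $s_XT+s_A\min\{T,R\}+s_B\min\{T,S\}$ over all non-negative reals $x_{\kappa\kappa_A\kappa_B}$, $(\kappa,\kappa_A,\kappa_B)\in\{A,B,X\}^3$, summing to one is equal to the maximum of $s_XT+s_AR+s_BS$ over all non-negative reals $x_{\kappa\kappa_A\kappa_B}$ summing to one that additionally satisfy $R\le T$ and $S\le T$.
   Context: For triples $(\kappa,\kappa_A,\kappa_B),(\lambda,\lambda_A,\lambda_B)\in\{A,B,X\}^3$ write $\kappa\kappa_A\kappa_B\to\lambda\lambda_A\lambda_B$ if each of the pairs $(\kappa,\lambda)$, $(\kappa_A,\lambda_A)$, $(\kappa_B,\lambda_B)$ is one of $(A,B),(A,X),(B,X),(X,A),(X,B),(X,X)$, and moreover $(\kappa_B,\lambda_A)\neq(A,B)$. Given reals $x_{\kappa\kappa_A\kappa_B}$, let $T=\sum_{A\kappa_A\kappa_B\to B\lambda_A\lambda_B}x_{A\kappa_A\kappa_B}x_{B\lambda_A\lambda_B}$ (sum over all $\kappa_A,\kappa_B,\lambda_A,\lambda_B$ with $A\kappa_A\kappa_B\to B\lambda_A\lambda_B$), $R=\sum_{\kappa A\kappa_B\to\lambda B\lambda_B}x_{\kappa A\kappa_B}x_{\lambda B\lambda_B}$, $S=\sum_{\kappa\kappa_A A\to\lambda\lambda_A B}x_{\kappa\kappa_A A}x_{\lambda\lambda_A B}$, and $s_\mu=\sum_{\kappa_A,\kappa_B}x_{\mu\kappa_A\kappa_B}$ for $\mu\in\{A,B,X\}$. *)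

(* Defs.v *)
From mathcomp Require Import all_boot all_order all_algebra.
From mathcomp Require Import reals.
Set Implicit Arguments. Unset Strict Implicit. Unset Printing Implicit Defensive.
Import Order.TTheory GRing.Theory Num.Theory.
Local Open Scope ring_scope.

Definition lbl := 'I_3.
Definition lA : lbl := @Ordinal 3 0 isT.
Definition lB : lbl := @Ordinal 3 1 isT.
Definition lX : lbl := @Ordinal 3 2 isT.

Definition stepok (k l : lbl) : bool :=
  [|| (k == lA) && (l == lB), (k == lA) && (l == lX), (k == lB) && (l == lX),
      (k == lX) && (l == lA), (k == lX) && (l == lB) | (k == lX) && (l == lX)].

Definition arrow (k kA kB l mA mB : lbl) : bool :=
  [&& stepok k l, stepok kA mA, stepok kB mB & ~~ ((kB == lA) && (mA == lB))].

Section Quantities.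
Variable R : realType.
Variable x : lbl -> lbl -> lbl -> R.

Definition Tq : R :=
  \sum_(kA : lbl) \sum_(kB : lbl) \sum_(lA' : lbl) \sum_(lB' : lbl)
    (if arrow lA kA kB lB lA' lB' then x lA kA kB * x lB lA' lB' else 0).
Definition Rq : R :=
  \sum_(k : lbl) \sum_(kB : lbl) \sum_(l : lbl) \sum_(lB' : lbl)
    (if arrow k lA kB l lB lB' then x k lA kB * x l lB lB' else 0).
Definition Sq : R :=
  \sum_(k : lbl) \sum_(kA : lbl) \sum_(l : lbl) \sum_(lA' : lbl)
    (if arrow k kA lA l lA' lB then x k kA lA * x l lA' lB else 0).
Definition sq (mu : lbl) : R := \sum_(kA : lbl) \sum_(kB : lbl) x mu kA kB.

Definition in_simplex : Prop :=
  (forall k kA kB, 0 <= x k kA kB) /\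
  \sum_(k : lbl) \sum_(kA : lbl) \sum_(kB : lbl) x k kA kB = 1.

Definition Fobj : R :=
  sq lX * Tq + sq lA * Num.min Tq Rq + sq lB * Num.min Tq Sq.
Definition Gobj : R := sq lX * Tq + sq lA * Rq + sq lB * Sq.
End Quantities.

(* Main.v *)
Require Import Defs.
From mathcomp Require Import all_boot all_order all_algebra.
From mathcomp Require Import reals ring lra.
From mathcomp Require Import all_classical all_reals all_analysis.
Import Order.TTheory GRing.Theory Num.Theory.
Import numFieldNormedType.Exports.
Local Open Scope classical_set_scope.
Local Open Scope ring_scope.
Set Implicit Arguments. Unset Strict Implicit. Unset Printing Implicit Defensive.

Lemma sum_lbl (R : realType) (f : lbl -> R) : \sum_(k : lbl) f k = f lA + f lB + f lX.
Proof.
rewrite /lbl !big_ord_recl big_ord0 addr0 addrA.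
by congr (f _ + f _ + f _); apply: val_inj.
Qed.

Lemma sum_pair (R : realType) (F : lbl * lbl -> R) :
  \sum_(p : lbl * lbl) F p = \sum_(i : lbl) \sum_(j : lbl) F (i, j).
Proof. by rewrite pair_big; apply: eq_bigr => -[]. Qed.

Lemma lblP (k : lbl) : [\/ k = lA, k = lB | k = lX].
Proof.
case: k => [[|[|[|n]]] Hn].
- by constructor 1; apply: val_inj.
- by constructor 2; apply: val_inj.
- by constructor 3; apply: val_inj.
- by [].
Qed.

Definition pX : lbl * lbl := (lX, lX).

Definition cls (p : lbl * lbl) : nat :=
  match nat_of_ord p.1, nat_of_ord p.2 with
  | 0, 2 | 1, 1 | 1, 2 => 0
  | 0, 0 | 2, 0 | 2, 1 => 1
  | _, _ => 2
  end%N.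

Definition wt (R : realType) (c d : R) (p : lbl * lbl) : R :=
  if cls p == 0%N then c else if cls p == 1%N then d else 1.

Definition Mv (R : realType) (c d : R) (p q : lbl * lbl) : R :=
  (if q == p then wt c d p else 0) + (if q == pX then 1 - wt c d p else 0).

Definition zz (R : realType) (c d : R) (x : lbl -> lbl -> lbl -> R) (k a b : lbl) : R :=
  \sum_(p : lbl * lbl) x k p.1 p.2 * Mv c d p (a, b).

Lemma zzA (R : realType) c d x k a b : (a, b) != pX ->
  @zz R c d x k a b = wt c d (a, b) * x k a b.
Proof.
rewrite /zz sum_pair !sum_lbl /Mv.
case: (lblP a) => ->; case: (lblP b) => -> //= _; rewrite /wt /=; ring.
Qed.

Lemma sumM (R : realType) c d p : \sum_q @Mv R c d p q = 1.
Proof.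
rewrite big_split /= -!big_mkcond /= !big_pred1_eq; ring.
Qed.


Lemma mono_bilin (R : realType) (I : finType) (t : I -> I -> bool) (M : I -> I -> R)
  (yA yB : I -> R) :
  (forall p q, 0 <= M p q) -> (forall p, \sum_q M p q = 1) ->
  (forall p p' q q', t p p' -> M p q != 0 -> M p' q' != 0 -> t q q') ->
  (forall p, 0 <= yA p) -> (forall p, 0 <= yB p) ->
  \sum_p \sum_p' (if t p p' then yA p * yB p' else 0) <=
  \sum_q \sum_q' (if t q q' then (\sum_p yA p * M p q) * (\sum_p' yB p' * M p' q') else 0).
Proof.
move=> M0 M1 Mt yA0 yB0.
pose f q q' p p' := if t q q' then yA p * M p q * (yB p' * M p' q') else 0.
have -> : \sum_q \sum_q' (if t q q' then (\sum_p yA p * M p q) * (\sum_p' yB p' * M p' q') else 0)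
  = \sum_q \sum_q' \sum_p \sum_p' f q q' p p'.
  apply: eq_bigr => q _; apply: eq_bigr => q' _; rewrite /f.
  case: (t q q'); last by rewrite big1 // => p _; rewrite big1.
  rewrite big_distrl /=; apply: eq_bigr => p _; by rewrite big_distrr.
have -> : \sum_q \sum_q' \sum_p \sum_p' f q q' p p' = \sum_p \sum_p' \sum_q \sum_q' f q q' p p'.
  transitivity (\sum_q \sum_p \sum_q' \sum_p' f q q' p p').
    by apply: eq_bigr => q _; rewrite exchange_big.
  rewrite exchange_big; apply: eq_bigr => p _.
  transitivity (\sum_q \sum_p' \sum_q' f q q' p p').
    by apply: eq_bigr => q _; rewrite exchange_big.
  by rewrite exchange_big.
apply: ler_sum => p _; apply: ler_sum => p' _.
have fge0 q q' : 0 <= f q q' p p'.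
  rewrite /f; case: ifP => _ //; apply: mulr_ge0; apply: mulr_ge0 => //.
case: ifP => tpp; last by apply: sumr_ge0 => q _; apply: sumr_ge0.
have -> : \sum_q \sum_q' f q q' p p' = \sum_q \sum_q' yA p * M p q * (yB p' * M p' q').
  apply: eq_bigr => q _; apply: eq_bigr => q' _; rewrite /f.
  case: ifP => // tqq.
  have [->|Mq] := eqVneq (M p q) 0; first by rewrite mulr0 mul0r.
  have [->|Mq'] := eqVneq (M p' q') 0; first by rewrite !mulr0.
  by rewrite (Mt _ _ _ _ tpp Mq Mq') in tqq.
suff -> : \sum_q \sum_q' yA p * M p q * (yB p' * M p' q') = yA p * yB p' by [].
  rewrite (eq_bigr (fun q => yA p * M p q * \sum_q' (yB p' * M p' q'))); last first.
    by move=> q _; rewrite mulr_sumr.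
  by rewrite -mulr_suml -!mulr_sumr !M1 !mulr1.
Qed.

Lemma wt01 (R : realType) (c d : R) p : 0 <= c <= 1 -> 0 <= d <= 1 ->
  0 <= wt c d p <= 1.
Proof. by move=> hc hd; rewrite /wt; case: ifP => _ //; case: ifP => _ //; rewrite lexx ler01. Qed.

Lemma Mv_ge0 (R : realType) (c d : R) p q : 0 <= c <= 1 -> 0 <= d <= 1 ->
  0 <= Mv c d p q.
Proof.
move=> hc hd; have /andP[w0 w1] := wt01 p hc hd.
rewrite /Mv; apply: addr_ge0; case: ifP => _ //; by rewrite subr_ge0.
Qed.

Lemma Mv_supp (R : realType) (c d : R) p q : Mv c d p q != 0 -> q = p \/ q = pX.
Proof.
move=> H; have [->|qp] := eqVneq q p; first by left.
have [->|qX] := eqVneq q pX; first by right.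
by move: H; rewrite /Mv (negbTE qp) (negbTE qX) addr0 eqxx.
Qed.

Definition tT (p p' : lbl * lbl) : bool := arrow lA p.1 p.2 lB p'.1 p'.2.

Lemma tT_X1 p' : tT pX p'.
Proof. by case: p' => a b; rewrite /tT /=; case: (lblP a) => ->; case: (lblP b) => ->. Qed.
Lemma tT_X2 p : tT p pX.
Proof. by case: p => a b; rewrite /tT /=; case: (lblP a) => ->; case: (lblP b) => ->. Qed.

Lemma Tq_pair (R : realType) (y : lbl -> lbl -> lbl -> R) :
  Tq y = \sum_p \sum_p' (if tT p p' then y lA p.1 p.2 * y lB p'.1 p'.2 else 0).
Proof.
rewrite /Tq sum_pair; apply: eq_bigr => kA _; apply: eq_bigr => kB _.
by rewrite sum_pair.
Qed.

Definition nonnegx (R : realType) (x : lbl -> lbl -> lbl -> R) := forall k a b, 0 <= x k a b.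

Lemma Tq_mono (R : realType) (c d : R) x : 0 <= c <= 1 -> 0 <= d <= 1 -> nonnegx x ->
  Tq x <= Tq (zz c d x).
Proof.
move=> hc hd x0; rewrite !Tq_pair.
have -> : \sum_p \sum_p' (if tT p p' then zz c d x lA p.1 p.2 * zz c d x lB p'.1 p'.2 else 0) =
  \sum_q \sum_q' (if tT q q' then (\sum_p x lA p.1 p.2 * Mv c d p q) * (\sum_p' x lB p'.1 p'.2 * Mv c d p' q') else 0).
  by apply: eq_bigr => -[a b] _; apply: eq_bigr => -[a' b'] _.
apply: (mono_bilin (yA := fun p => x lA p.1 p.2) (yB := fun p => x lB p.1 p.2)).
- by move=> p q; apply: Mv_ge0.
- by move=> p; apply: sumM.
- move=> p p' q q' tpp /Mv_supp [->|->] /Mv_supp [->|->] //; first [exact: tT_X2 | exact: tT_X1].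
- by move=> p; apply: x0.
- by move=> p; apply: x0.
Qed.


Definition wx (R : realType) (c d : R) (x : lbl -> lbl -> lbl -> R) (k a b : lbl) : R :=
  wt c d (a, b) * x k a b.

Lemma Rq_zz (R : realType) (c d : R) (x : lbl -> lbl -> lbl -> R) : Rq (zz c d x) = Rq (wx c d x).
Proof.
rewrite /Rq; apply: eq_bigr => k _; apply: eq_bigr => kB _; apply: eq_bigr => l _;
  apply: eq_bigr => lB' _; by rewrite !zzA.
Qed.

Lemma Sq_zz (R : realType) (c d : R) (x : lbl -> lbl -> lbl -> R) : Sq (zz c d x) = Sq (wx c d x).
Proof.
rewrite /Sq; apply: eq_bigr => k _; apply: eq_bigr => kB _; apply: eq_bigr => l _;
  apply: eq_bigr => lB' _; by rewrite !zzA //; apply/negP => /eqP[].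
Qed.

Lemma Rq_wx (R : realType) (c d : R) (x : lbl -> lbl -> lbl -> R) : Rq (wx c d x) = Rq (wx c 1 x).
Proof. rewrite /Rq !sum_lbl /wx /wt /=; ring. Qed.
Lemma Rq_wx1 (R : realType) (x : lbl -> lbl -> lbl -> R) : Rq (wx 1 1 x) = Rq x.
Proof. rewrite /Rq !sum_lbl /wx /wt /=; ring. Qed.
Lemma Rq_wx0 (R : realType) (x : lbl -> lbl -> lbl -> R) : Rq (wx 0 1 x) = 0.
Proof. rewrite /Rq !sum_lbl /wx /wt /=; ring. Qed.
Lemma Sq_wx (R : realType) (c d : R) (x : lbl -> lbl -> lbl -> R) : Sq (wx c d x) = Sq (wx 1 d x).
Proof. rewrite /Sq !sum_lbl /wx /wt /=; ring. Qed.
Lemma Sq_wx1 (R : realType) (x : lbl -> lbl -> lbl -> R) : Sq (wx 1 1 x) = Sq x.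
Proof. rewrite /Sq !sum_lbl /wx /wt /=; ring. Qed.
Lemma Sq_wx0 (R : realType) (x : lbl -> lbl -> lbl -> R) : Sq (wx 1 0 x) = 0.
Proof. rewrite /Sq !sum_lbl /wx /wt /=; ring. Qed.

Lemma sq_zz (R : realType) (c d : R) (x : lbl -> lbl -> lbl -> R) mu : sq (zz c d x) mu = sq x mu.
Proof. rewrite /sq /zz !sum_lbl !sum_pair !sum_lbl /Mv /wt /=; ring. Qed.

Lemma simplex_zz (R : realType) (c d : R) (x : lbl -> lbl -> lbl -> R) : 0 <= c <= 1 -> 0 <= d <= 1 ->
  in_simplex x -> in_simplex (zz c d x).
Proof.
move=> hc hd [x0 x1]; split.
  move=> k a b; apply: sumr_ge0 => p _; apply: mulr_ge0; [exact: x0|exact: Mv_ge0].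
rewrite -x1; apply: eq_bigr => k _; exact: sq_zz.
Qed.


Section Cont.
Context {R : realType} {T : topologicalType}.
Implicit Types f g : T -> R.

Lemma cont_add f g : continuous f -> continuous g -> continuous (fun t => f t + g t).
Proof. by move=> hf hg z; exact (continuousD (hf z) (hg z)). Qed.
Lemma cont_mul f g : continuous f -> continuous g -> continuous (fun t => f t * g t).
Proof. by move=> hf hg z; exact (continuousM (hf z) (hg z)). Qed.
Lemma cont_min f g : continuous f -> continuous g -> continuous (fun t => Num.min (f t) (g t)).
Proof. by move=> hf hg z; exact (continuous_min (hf z) (hg z)). Qed.
Lemma cont_cst (a : R) : continuous (fun _ : T => a).
Proof. exact: cst_continuous. Qed.
Lemma cont_sub f g : continuous f -> continuous g -> continuous (fun t => f t - g t).
Proof. by move=> hf hg z; exact (continuousB (hf z) (hg z)). Qed.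
Lemma cont_if (b : bool) f g : continuous f -> continuous g -> continuous (fun t => if b then f t else g t).
Proof. by case: b. Qed.
Lemma cont_sum (I : Type) (s : seq I) (P : pred I) (F : I -> T -> R) :
  (forall i, continuous (F i)) -> continuous (fun t => \sum_(i <- s | P i) F i t).
Proof.
move=> hF; elim: s => [|i s IH].
  by under eq_fun do rewrite big_nil; exact: cont_cst.
under eq_fun do rewrite big_cons.
by apply: cont_if => //; apply: cont_add.
Qed.
End Cont.


Section ContQ.
Context {R : realType} {T : topologicalType}.
Variable y : T -> lbl -> lbl -> lbl -> R.
Hypothesis hy : forall k a b, continuous (fun t => y t k a b).

Lemma cont_Tq : continuous (fun t => Tq (y t)).
Proof.
rewrite /Tq; do 4 (apply: cont_sum => ?).
by apply: cont_if; [apply: cont_mul|apply: cont_cst].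
Qed.
Lemma cont_Rq : continuous (fun t => Rq (y t)).
Proof.
rewrite /Rq; do 4 (apply: cont_sum => ?).
by apply: cont_if; [apply: cont_mul|apply: cont_cst].
Qed.
Lemma cont_Sq : continuous (fun t => Sq (y t)).
Proof.
rewrite /Sq; do 4 (apply: cont_sum => ?).
by apply: cont_if; [apply: cont_mul|apply: cont_cst].
Qed.
Lemma cont_sq mu : continuous (fun t => sq (y t) mu).
Proof. by rewrite /sq; do 2 (apply: cont_sum => ?). Qed.
Lemma cont_Fobj : continuous (fun t => Fobj (y t)).
Proof.
rewrite /Fobj; apply: cont_add; [apply: cont_add|].
- apply: cont_mul; [exact: cont_sq|exact: cont_Tq].
- apply: cont_mul; [exact: cont_sq|apply: cont_min; [exact: cont_Tq|exact: cont_Rq]].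
- apply: cont_mul; [exact: cont_sq|apply: cont_min; [exact: cont_Tq|exact: cont_Sq]].
Qed.
End ContQ.

Lemma cont_wt (R : realType) (c d : R -> R) p :
  continuous c -> continuous d -> continuous (fun t => wt (c t) (d t) p).
Proof. by move=> hc hd; rewrite /wt; apply: cont_if => //; apply: cont_if => //; apply: cont_cst. Qed.

Lemma cont_id (R : realType) : continuous (fun t : R => t).
Proof. by move=> z; exact: cvg_id. Qed.

Lemma cont_wx (R : realType) (x : lbl -> lbl -> lbl -> R) (c d : R -> R) :
  continuous c -> continuous d -> forall k a b, continuous (fun t => wx (c t) (d t) x k a b).
Proof. by move=> hc hd k a b; rewrite /wx; apply: cont_mul; [apply: cont_wt|apply: cont_cst]. Qed.

Lemma Tq_ge0 (R : realType) (x : lbl -> lbl -> lbl -> R) : nonnegx x -> 0 <= Tq x.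
Proof.
move=> x0; rewrite /Tq; do 4 (apply: sumr_ge0 => ? _).
by case: ifP => // _; apply: mulr_ge0.
Qed.

Lemma choose_par (R : realType) (f : R -> R) (tau : R) :
  continuous f -> f 0 = 0 -> 0 <= tau ->
  exists c, 0 <= c <= 1 /\ f c = Num.min tau (f 1).
Proof.
move=> cf f0 t0.
have [le|lt] := leP (f 1) tau.
  by exists 1; rewrite ler01 lexx; split => //; rewrite min_r.
have cfw : {within `[0, 1], continuous f} by apply: continuous_subspaceT.
have hv : Num.min (f 0) (f 1) <= tau <= Num.max (f 0) (f 1).
  by rewrite f0 ge_min le_max t0 (ltW lt) ?orbT.
have [c] := @IVT R f 0 1 tau ler01 cfw hv.
rewrite in_itv /= => hc fc; exists c; split; first by [].
by rewrite fc.
Qed.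

Lemma sq_ge0 (R : realType) (x : lbl -> lbl -> lbl -> R) mu : nonnegx x -> 0 <= sq x mu.
Proof. by move=> x0; rewrite /sq; do 2 (apply: sumr_ge0 => ? _). Qed.

Lemma key (R : realType) (x : lbl -> lbl -> lbl -> R) : in_simplex x ->
  exists y, in_simplex y /\ Rq y <= Tq y /\ Sq y <= Tq y /\ Fobj x <= Gobj y.
Proof.
move=> xs; have x0 : nonnegx x by case: xs.
set tau := Tq x.
have t0 : 0 <= tau by apply: Tq_ge0.
have [c [hc Rc]] : exists c, 0 <= c <= 1 /\ Rq (wx c 1 x) = Num.min tau (Rq x).
  have := @choose_par R (fun c => Rq (wx c 1 x)) tau.
  rewrite /= Rq_wx0 Rq_wx1; apply => //.
  by apply: cont_Rq; apply: cont_wx; [exact: cont_id|exact: cont_cst].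
have [d [hd Sd]] : exists d, 0 <= d <= 1 /\ Sq (wx 1 d x) = Num.min tau (Sq x).
  have := @choose_par R (fun d => Sq (wx 1 d x)) tau.
  rewrite /= Sq_wx0 Sq_wx1; apply => //.
  by apply: cont_Sq; apply: cont_wx; [exact: cont_cst|exact: cont_id].
have Tz : tau <= Tq (zz c d x) by apply: Tq_mono.
have Rz : Rq (zz c d x) = Num.min tau (Rq x) by rewrite Rq_zz Rq_wx.
have Sz : Sq (zz c d x) = Num.min tau (Sq x) by rewrite Sq_zz Sq_wx.
exists (zz c d x); split; first exact: simplex_zz.
split; first by rewrite Rz; apply: le_trans Tz; rewrite ge_min lexx.
split; first by rewrite Sz; apply: le_trans Tz; rewrite ge_min lexx.
rewrite /Fobj /Gobj Rz Sz !sq_zz -/tau.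
by rewrite lerD2r lerD2r ler_wpM2l // sq_ge0.
Qed.

Lemma GF (R : realType) (x : lbl -> lbl -> lbl -> R) : Rq x <= Tq x -> Sq x <= Tq x ->
  Gobj x = Fobj x.
Proof. by move=> hR hS; rewrite /Gobj /Fobj !min_r. Qed.


Definition N3 := #|{: lbl * lbl * lbl}|.

Definition xv (R : realType) (v : 'rV[R]_N3) (k a b : lbl) : R := v ord0 (enum_rank (k, a, b)).
Definition vx (R : realType) (x : lbl -> lbl -> lbl -> R) : 'rV[R]_N3 :=
  \row_i x (enum_val i).1.1 (enum_val i).1.2 (enum_val i).2.

Lemma xv_vx (R : realType) (x : lbl -> lbl -> lbl -> R) : xv (vx x) = x.
Proof.
apply/funext => k; apply/funext => a; apply/funext => b.
by rewrite /xv /vx mxE enum_rankK.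
Qed.

Lemma le_sum1 (R : realType) (I : finType) (F : I -> R) i :
  (forall j, 0 <= F j) -> F i <= \sum_j F j.
Proof. by move=> F0; rewrite (bigD1 i) //= lerDl sumr_ge0. Qed.

Lemma entry_le (R : realType) (x : lbl -> lbl -> lbl -> R) k a b : nonnegx x ->
  x k a b <= \sum_(k : lbl) \sum_(kA : lbl) \sum_(kB : lbl) x k kA kB.
Proof.
move=> x0.
apply: (le_trans _ (le_sum1 k _)); last by move=> j; do 2 (apply: sumr_ge0 => ? _).
apply: (le_trans _ (le_sum1 a _)); last by move=> j; apply: sumr_ge0 => ? _.
exact: le_sum1.
Qed.

Lemma closed_forall (T : topologicalType) (I : Type) (P : I -> set T) :
  (forall i, closed (P i)) -> closed [set v | forall i, P i v].
Proof.
move=> hP.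
rewrite (_ : [set v | forall i, P i v] = \bigcap_(i in setT) P i).
  by apply: closed_bigI => i _; exact: hP.
by apply/seteqP; split => v /= H i //; apply: H.
Qed.

Lemma cont_xv (R : realType) k a b : continuous (fun v : 'rV[R]_N3 => xv v k a b).
Proof. exact: coord_continuous. Qed.

Definition Simp (R : realType) : set 'rV[R]_N3 := [set v | in_simplex (xv v)].

Lemma Simp_closed (R : realType) : closed (@Simp R).
Proof.
apply: closedI.
  apply: closed_forall => k; apply: closed_forall => a; apply: closed_forall => b.
  exact (proj1 (continuous_closedP _) (@cont_xv R k a b) _ (@closed_ge _ 0)).
have cs : continuous (fun v : 'rV[R]_N3 => \sum_(k : lbl) \sum_(kA : lbl) \sum_(kB : lbl) xv v k kA kB).
  by do 3 (apply: cont_sum => ?); exact: cont_xv.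
exact (proj1 (continuous_closedP _) cs _ (@closed_eq _ 1)).
Qed.

Lemma Simp_compact (R : realType) : compact (@Simp R).
Proof.
have hB := @rV_compact R N3 (fun=> `[(0:R), 1]%classic) (fun=> @segment_compact R 0 1).
apply: (subclosed_compact (@Simp_closed R) hB) => v [v0 v1] i /=.
have -> : v ord0 i = xv v (enum_val i).1.1 (enum_val i).1.2 (enum_val i).2.
  by rewrite /xv -surjective_pairing -surjective_pairing enum_valK.
rewrite in_itv /=; apply/andP; split; first exact: v0.
by rewrite -v1; apply: entry_le.
Qed.

Definition x0 (R : realType) (k a b : lbl) : R :=
  if (k == lX) && (a == lX) && (b == lX) then 1 else 0.

Lemma x0_simplex (R : realType) : in_simplex (@x0 R).
Proof.
split.
  by move=> k a b; rewrite /x0; case: ifP => _ //; rewrite ler01.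
rewrite !sum_lbl /x0 /=; ring.
Qed.

Theorem lemma6p2 (R : realType) :
  exists M : R,
    ((exists x : lbl -> lbl -> lbl -> R, in_simplex x /\ Fobj x = M) /\
     (forall x : lbl -> lbl -> lbl -> R, in_simplex x -> Fobj x <= M)) /\
    ((exists x : lbl -> lbl -> lbl -> R,
        in_simplex x /\ Rq x <= Tq x /\ Sq x <= Tq x /\ Gobj x = M) /\
     (forall x : lbl -> lbl -> lbl -> R,
        in_simplex x -> Rq x <= Tq x -> Sq x <= Tq x -> Gobj x <= M)).
Proof.
have ne : (@Simp R) !=set0.
  by exists (vx (@x0 R)); rewrite /Simp /= xv_vx; exact: x0_simplex.
have cF : {within @Simp R, continuous (fun v => Fobj (xv v))}.
  by apply: continuous_subspaceT; apply: cont_Fobj; exact: cont_xv.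
have [c cS cmax] := compact_EVT_max ne (@Simp_compact R) cF.
have cS' : in_simplex (xv c) by move: cS; rewrite inE.
have Fle x : in_simplex x -> Fobj x <= Fobj (xv c).
  move=> xs; rewrite -(xv_vx x); apply: cmax; rewrite inE /Simp /= xv_vx //.
exists (Fobj (xv c)); split; first by split => //; exists (xv c).
split; last by move=> x xs hR hS; rewrite GF //; apply: Fle.
have [y [ys [hR [hS hFG]]]] := key cS'.
exists y; split => //; split => //; split => //.
by apply: le_anti; rewrite hFG andbT GF //; apply: Fle.
Qed.
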